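(* Let $0<\alpha\le\delta<\infty$ and $0<\gamma<\tfrac13$, and define $\mathcal R^a_1(a)_k=\frac{1}{k+1}\sum_{n=0}^k a_na_{k-n}$ for $k\in\mathbb N_0$. Then $\mathcal R^a_1$, acting on $X_{\alpha,\delta}$, is a strict contraction with respect to $d(a,b)=\sum_{k\ge0}(\gamma/\delta)^k|a_k-b_k|$: there is $C<1$ such that $d(\mathcal R^a_1(a),\mathcal R^a_1(b))\le C\,d(a,b)$ for all $a,b\in X_{\alpha,\delta}$.
   Context: $X_{\alpha,\delta}$ is the set of real sequences $a=(a_k)_{k\ge0}$ with $a_0=1$, $a_1=\alpha$, $0\le a_k\le\delta^k$ for $k\ge2$. *)

(* Defs.v *)
From Stdlib Require Import Reals.
From Coquelicot Require Import Coquelicot.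
Open Scope R_scope.

Definition X_set (alpha delta : R) (a : nat -> R) : Prop :=
  a 0%nat = 1 /\ a 1%nat = alpha /\
  (forall k : nat, (2 <= k)%nat -> 0 <= a k /\ a k <= delta ^ k).

Definition Ra1 (a : nat -> R) (k : nat) : R :=
  / INR (k + 1) * sum_f_R0 (fun n => a n * a (k - n)%nat) k.

Definition dist_term (gamma delta : R) (a b : nat -> R) (k : nat) : R :=
  (gamma / delta) ^ k * Rabs (a k - b k).

Definition dist_w (gamma delta : R) (a b : nat -> R) : R :=
  Series (dist_term gamma delta a b).

(* Main.v *)
Require Import Defs.
From Stdlib Require Import Reals.
From Coquelicot Require Import Coquelicot.
From Stdlib Require Import Lra Lia.
Open Scope R_scope.

Lemma absX (alpha delta : R) a n : 0 < alpha -> alpha <= delta ->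
  X_set alpha delta a -> Rabs (a n) <= delta ^ n.
Proof.
  intros h1 h2 [H0 [H1 H2]].
  destruct n as [|[|n]].
  - rewrite H0, Rabs_R1; simpl; lra.
  - rewrite H1; simpl; rewrite Rabs_right; lra.
  - destruct (H2 (S (S n))) as [h3 h4]; [lia|]. rewrite Rabs_right; lra.
Qed.

Lemma absE (alpha delta : R) a b n : 0 < alpha -> alpha <= delta ->
  X_set alpha delta a -> X_set alpha delta b -> Rabs (a n - b n) <= delta ^ n.
Proof.
  intros h1 h2 [H0 [H1 H2]] [K0 [K1 K2]].
  assert (0 <= delta ^ n) by (apply pow_le; lra).
  destruct n as [|[|n]].
  - rewrite H0, K0, Rminus_diag, Rabs_R0; lra.
  - rewrite H1, K1, Rminus_diag, Rabs_R0; lra.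
  - destruct (H2 (S (S n))) as [h3 h4]; [lia|].
    destruct (K2 (S (S n))) as [h5 h6]; [lia|].
    unfold Rabs; destruct Rcase_abs; lra.
Qed.

Lemma powid (gamma delta : R) n m : 0 < delta ->
  delta ^ n * (gamma / delta) ^ (n + m) = gamma ^ n * (gamma/delta) ^ m.
Proof.
  intros hd. rewrite pow_add.
  replace gamma with ((gamma/delta) * delta) at 3 by (field; lra).
  rewrite Rpow_mult_distr. ring.
Qed.

Theorem proposition12 (alpha delta gamma : R) :
  0 < alpha -> alpha <= delta ->
  0 < gamma -> gamma < 1 / 3 ->
  exists C : R, C < 1 /\
    forall a b : nat -> R, X_set alpha delta a -> X_set alpha delta b ->
      ex_series (dist_term gamma delta (Ra1 a) (Ra1 b)) /\
      dist_w gamma delta (Ra1 a) (Ra1 b) <= C * dist_w gamma delta a b.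
Proof.
  intros ha had hg hg3.
  assert (hd : 0 < delta) by lra.
  assert (hr : 0 < gamma / delta) by (apply Rdiv_lt_0_compat; lra).
  exists (2 / (3 * (1 - gamma))). split.
  { apply (Rmult_lt_reg_r (3 * (1 - gamma))); [lra|].
    unfold Rdiv; rewrite Rmult_assoc, Rinv_l; lra. }
  intros a b Ha Hb.
  set (r := gamma / delta) in *.
  set (T := dist_term gamma delta a b).
  set (G := fun n : nat => gamma ^ n).
  assert (T0 : forall n, 0 <= T n).
  { intro n; unfold T, dist_term. fold r. apply Rmult_le_pos; [apply pow_le; lra|apply Rabs_pos]. }
  assert (TG : forall n, T n <= G n).
  { intro n; unfold T, G, dist_term. fold r.
    apply Rle_trans with (r ^ n * delta ^ n).
    - apply Rmult_le_compat_l; [apply pow_le; lra|]. apply (absE alpha); auto.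
    - rewrite <- Rpow_mult_distr. right. f_equal. unfold r; field; lra. }
  assert (Gs : is_series G (/ (1 - gamma))).
  { apply is_series_geom. rewrite Rabs_right; lra. }
  assert (Gabs : ex_series (fun n => Rabs (G n))).
  { eexists. eapply is_series_ext; [|exact Gs]. intro n; unfold G.
    rewrite Rabs_right; [reflexivity|]. apply Rle_ge, pow_le; lra. }
  assert (Tabs : ex_series (fun n => Rabs (T n))).
  { apply (@ex_series_le R_AbsRing R_CompleteNormedModule) with G; [|eexists; exact Gs].
    intro n. change norm with Rabs. rewrite Rabs_Rabsolu, Rabs_right; auto.
    apply Rle_ge; auto. }
  assert (Tex : ex_series T).
  { apply (@ex_series_le R_AbsRing R_CompleteNormedModule) with G; [|eexists; exact Gs].
    intro n. change norm with Rabs. rewrite Rabs_right; auto. apply Rle_ge; auto. }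
  destruct Tex as [D HD].
  pose proof (is_series_mult G T _ _ Gs HD Gabs Tabs) as P1.
  pose proof (is_series_mult T G _ _ HD Gs Tabs Gabs) as P2.
  set (S1 := fun k => sum_f_R0 (fun n => G n * T (k - n)%nat) k) in P1.
  set (S2 := fun k => sum_f_R0 (fun n => T n * G (k - n)%nat) k) in P2.
  assert (PB : forall k, r ^ k * Rabs (sum_f_R0 (fun n => a n * a (k - n)%nat) k
                 - sum_f_R0 (fun n => b n * b (k - n)%nat) k) <= S1 k + S2 k).
  { intro k. unfold S1, S2. rewrite <- plus_sum.
    rewrite <- minus_sum.
    eapply Rle_trans. { apply Rmult_le_compat_l; [apply pow_le; lra|]. apply sum_f_R0_triangle. }
    rewrite scal_sum. apply sum_Rle. intros n hn.
    unfold G, T, dist_term. fold r.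
    assert (E1 : Rabs (a n * a (k - n)%nat - b n * b (k - n)%nat) <=
       Rabs (a n) * Rabs (a (k-n)%nat - b (k-n)%nat) + Rabs (a n - b n) * Rabs (b (k-n)%nat)).
    { rewrite <- !Rabs_mult.
      replace (a n * a (k - n)%nat - b n * b (k - n)%nat) with
        (a n * (a (k-n)%nat - b (k-n)%nat) + (a n - b n) * b (k-n)%nat) by ring.
      apply Rabs_triang. }
    pose proof (absX alpha delta a n ha had Ha).
    pose proof (absX alpha delta b (k-n) ha had Hb).
    pose proof (Rabs_pos (a (k-n)%nat - b (k-n)%nat)).
    pose proof (Rabs_pos (a n - b n)).
    assert (E2 : Rabs (a n * a (k - n)%nat - b n * b (k - n)%nat) <=
       delta ^ n * Rabs (a (k-n)%nat - b (k-n)%nat) + Rabs (a n - b n) * delta ^ (k-n)).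
    { eapply Rle_trans; [exact E1|]. apply Rplus_le_compat.
      - apply Rmult_le_compat_r; auto.
      - apply Rmult_le_compat_l; auto. }
    eapply Rle_trans. { apply Rmult_le_compat_r; [apply pow_le; lra|exact E2]. }
    assert (Hk : k = (n + (k - n))%nat) by lia.
    assert (I1 : delta ^ n * r ^ k = gamma ^ n * r ^ (k-n)).
    { replace (r ^ k) with (r ^ (n + (k - n))) by (f_equal; lia). unfold r. apply powid; lra. }
    assert (I2 : delta ^ (k-n) * r ^ k = gamma ^ (k-n) * r ^ n).
    { replace (r ^ k) with (r ^ ((k - n) + n)) by (f_equal; lia). unfold r. apply powid; lra. }
    right.
    replace ((delta ^ n * Rabs (a (k - n)%nat - b (k - n)%nat) +
              Rabs (a n - b n) * delta ^ (k - n)) * r ^ k)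
     with ((delta ^ n * r ^ k) * Rabs (a (k - n)%nat - b (k - n)%nat) +
              Rabs (a n - b n) * (delta ^ (k - n) * r ^ k)) by ring.
    rewrite I1, I2. ring. }
  assert (PB2 : forall k, 0 <= dist_term gamma delta (Ra1 a) (Ra1 b) k <= / 3 * (S1 k + S2 k)).
  { intro k. unfold dist_term. fold r. split.
    { apply Rmult_le_pos; [apply pow_le; lra|apply Rabs_pos]. }
    assert (S0 : 0 <= S1 k + S2 k).
    { eapply Rle_trans; [|apply (PB k)]. apply Rmult_le_pos; [apply pow_le; lra|apply Rabs_pos]. }
    destruct Ha as [A0 [A1 _]]. destruct Hb as [B0 [B1 _]].
    destruct k as [|[|k]].
    - unfold Ra1; simpl. rewrite A0, B0, Rminus_diag, Rabs_R0. lra.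
    - unfold Ra1; simpl. rewrite A0, B0, A1, B1, Rminus_diag, Rabs_R0. lra.
    - unfold Ra1. rewrite <- Rmult_minus_distr_l, Rabs_mult.
      rewrite Rabs_right by (apply Rle_ge, Rlt_le, Rinv_0_lt_compat, lt_0_INR; lia).
      pose proof (PB (S (S k))) as PBk.
      assert (h3 : 3 <= INR (S (S k) + 1)).
      { replace 3 with (INR 3) by (simpl; ring). apply le_INR; lia. }
      assert (h3' : / INR (S (S k) + 1) <= / 3) by (apply Rinv_le_contravar; lra).
      set (X := Rabs _) in *.
      assert (0 <= X) by apply Rabs_pos.
      assert (0 <= r ^ S (S k)) by (apply pow_le; lra).
      assert (0 < / INR (S (S k) + 1)) by (apply Rinv_0_lt_compat; lra).
      apply Rle_trans with (r ^ S (S k) * X * / 3).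
      + rewrite <- Rmult_assoc, (Rmult_comm (r ^ _)), Rmult_assoc, (Rmult_comm (/ _)).
        apply Rmult_le_compat_l; [apply Rmult_le_pos; lra|lra].
      + rewrite Rmult_comm. apply Rmult_le_compat_l; lra. }
  assert (PS : is_series (fun k => / 3 * (S1 k + S2 k)) (/3 * (/ (1 - gamma) * D + D * / (1 - gamma)))).
  { apply (is_series_scal_l (/3) (fun k => S1 k + S2 k)).
    apply (is_series_plus S1 S2); assumption. }
  split.
  - apply (@ex_series_le R_AbsRing R_CompleteNormedModule) with (fun k => / 3 * (S1 k + S2 k)); [|eexists; exact PS].
    intro n. change norm with Rabs. destruct (PB2 n). rewrite Rabs_right; lra.
  - unfold dist_w. fold T. rewrite (is_series_unique T D HD).
    eapply Rle_trans. { apply Series_le; [exact PB2|eexists; exact PS]. }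
    rewrite (is_series_unique _ _ PS). right. field. lra.
Qed.
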